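(* If $G$ is a subcubic graph of order $n\ge 1$, then $\gamma_{e,f}^*(G)\ge \frac16\left(\sqrt{2n+\frac{49}{36}}+\frac76\right)$.
   Context: All graphs are finite, simple and undirected; subcubic means maximum degree at most $3$. The fractional porous exponential domination number $\gamma_{e,f}^*(G)$ is the optimum value of the linear program: minimize $\sum_{u\in V(G)}x(u)$ subject to $\sum_{u\in V(G)}\left(\frac12\right)^{\mathrm{dist}_G(u,v)-1}x(u)\ge 1$ for every $v\in V(G)$ and $x\ge 0$, where $\mathrm{dist}_G$ is the usual graph distance ($\infty$ between different components) and $\left(\frac12\right)^\infty=0$. *)

(* Defs.v *)
From HB Require Import structures.
From mathcomp Require Import all_boot all_order all_algebra.
Set Implicit Arguments. Unset Strict Implicit. Unset Printing Implicit Defensive.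
Import Order.TTheory GRing.Theory Num.Theory.

Definition simple_graph (T : finType) (e : rel T) : Prop :=
  symmetric e /\ irreflexive e.

Definition subcubic (T : finType) (e : rel T) : Prop :=
  forall x : T, #|[set y | e x y]| <= 3.

Fixpoint ball (T : finType) (e : rel T) (k : nat) (u : T) : {set T} :=
  match k with
  | 0 => [set u]
  | k'.+1 => ball e k' u :|: [set y | [exists x in ball e k' u, e x y]]
  end.

(* graph distance: least k with v in ball k u (meaningful when connect e u v,
   in which case the distance is < #|T|) *)
Definition gdist (T : finType) (e : rel T) (u v : T) : nat :=
  find (fun k => v \in ball e k u) (iota 0 #|T|).

Local Open Scope ring_scope.

(* (1/2)^(dist(u,v) - 1), with (1/2)^infinity = 0 *)
Definition pweight (R : numFieldType) (T : finType) (e : rel T) (u v : T) : R :=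
  if connect e u v then 2 / 2 ^+ gdist e u v else 0.

Definition fped_feasible (R : numFieldType) (T : finType) (e : rel T)
  (x : T -> R) : Prop :=
  (forall u, 0 <= x u) /\
  (forall v, 1 <= \sum_(u : T) pweight R e u v * x u).

Definition is_fped_number (R : numFieldType) (T : finType) (e : rel T)
  (g : R) : Prop :=
  (exists x, fped_feasible e x /\ \sum_(u : T) x u = g) /\
  (forall x, fped_feasible e x -> g <= \sum_(u : T) x u).

(* Main.v *)
Require Import Defs.
From HB Require Import structures.
From mathcomp Require Import all_boot all_order all_algebra.
From mathcomp Require Import ring lra zify.
Import Order.TTheory GRing.Theory Num.Theory.

Section G.
Variables (T : finType) (e : rel T).

Lemma nb_seq_card (s : seq T) : subcubic e ->
  (#|[set y | has (fun x => e x y) s]| <= 3 * size s)%N.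
Proof.
move=> sc; elim: s => [|x s IH].
  by rewrite (_ : [set y | _] = set0) ?cards0 //; apply/setP=> y; rewrite !inE.
have -> : [set y | has (fun x0 => e x0 y) (x :: s)] =
   [set y | e x y] :|: [set y | has (fun x => e x y) s].
  by apply/setP=> y; rewrite !inE.
apply: leq_trans (leq_card_setU _ _).1 _.
by rewrite /= mulnS leq_add // sc.
Qed.

Lemma ball_succ_card k u : subcubic e ->
  (#|ball e k.+1 u| <= 4 * #|ball e k u|)%N.
Proof.
move=> sc /=.
apply: leq_trans (leq_card_setU _ _).1 _.
have -> : [set y | [exists x in ball e k u, e x y]] =
  [set y | has (fun x => e x y) (enum (ball e k u))].
  apply/setP=> y; rewrite !inE; apply/existsP/hasP.
    by case=> x /andP[xb exy]; exists x; rewrite ?mem_enum.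
  by case=> x xb exy; exists x; rewrite -mem_enum xb.
have := nb_seq_card (enum (ball e k u)) sc; rewrite -cardE => h.
rewrite (mulnC 4) mulnS mulnC; exact: leq_add.
Qed.

Lemma ball_card k u : subcubic e -> (#|ball e k u| <= 4 ^ k)%N.
Proof.
move=> sc; elim: k => [|k IH]; first by rewrite /= cards1.
apply: leq_trans (ball_succ_card _ _ sc) _.
by rewrite expnS leq_mul2l.
Qed.

Lemma ball_mono k j u : ball e k u \subset ball e (k + j) u.
Proof.
elim: j => [|j IH]; first by rewrite addn0.
by rewrite addnS /=; apply: subset_trans IH (subsetUl _ _).
Qed.

Lemma ball_step k u x y : x \in ball e k u -> e x y -> y \in ball e k.+1 u.
Proof.
by move=> xb exy /=; rewrite !inE; apply/orP; right; apply/existsP; exists x; rewrite xb.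
Qed.

Lemma path_ball u p : forall x k, x \in ball e k u -> path e x p ->
  last x p \in ball e (k + size p) u.
Proof.
elim: p => [|y p IH] x k xb /=; first by rewrite addn0.
case/andP=> exy pp; rewrite addnS -addSn; apply: IH pp.
exact: ball_step exy.
Qed.

Lemma gdist_ok u v : connect e u v ->
  (gdist e u v < #|T|)%N /\ v \in ball e (gdist e u v) u.
Proof.
case/connectP=> p pp ->.
case: (shortenP pp) => p' pp' up' _.
have hb := path_ball u p' u 0 (set11 u) pp'.
have hs : (size p' < #|T|)%N.
  by rewrite -ltnS -[(size p').+1]/(size (u :: p')) -(card_uniqP up'); exact: max_card.
have hh : has (fun k => last u p' \in ball e k u) (iota 0 #|T|).
  by apply/hasP; exists (size p'); rewrite ?mem_iota //.
split; first by rewrite /gdist -[X in (_ < X)%N](size_iota 0) -has_find.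
have := nth_find 0 hh; rewrite nth_iota //.
by rewrite -[X in (_ < X)%N](size_iota 0) -has_find.
Qed.
End G.

Local Open Scope ring_scope.

Section Rr.
Variables (R : rcfType) (T : finType) (e : rel T) (u : T).

Definition ind (v : T) (k : nat) : R :=
  if v \in ball e k u then (2 ^+ k.+1)^-1 else 0.

Lemma ind_ge0 v k : 0 <= ind v k.
Proof. by rewrite /ind; case: ifP => // _; rewrite invr_ge0 exprn_ge0. Qed.

Lemma geo v d : v \in ball e d u -> forall j,
  (2 ^+ d)^-1 - (2 ^+ (d + j))^-1 <= \sum_(k < d + j) ind v k.
Proof.
move=> vb; elim=> [|j IH].
  by rewrite addn0 subrr sumr_ge0 // => k _; apply: ind_ge0.
rewrite addnS big_ord_recr /= /ind.
have -> : v \in ball e (d + j) u by apply: (subsetP (@ball_mono _ e d j u)).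
rewrite !exprS !invfM.
set p := (2 ^+ (d + j))^-1 in IH *.
rewrite -/(ind v _).
have -> : \sum_(i < d + j) (if v \in ball e i u then (2 ^+ i.+1)^-1 else 0 : R)
   = \sum_(i < d + j) ind v i by [].
lra.
Qed.

Lemma pw_bound v : pweight R e u v <=
  2 * ((2 ^+ #|T|)^-1 + \sum_(k < #|T|) ind v k).
Proof.
have hs : 0 <= \sum_(k < #|T|) ind v k by rewrite sumr_ge0 // => k _; apply: ind_ge0.
have hp : 0 <= (2 ^+ #|T|)^-1 :> R by rewrite invr_ge0 exprn_ge0.
rewrite /pweight; case: ifP => [c|_]; last by rewrite mulr_ge0 // addr_ge0.
case: (@gdist_ok _ e _ _ c) => lt vb.
have := @geo v _ vb (#|T| - gdist e u v); rewrite subnKC ?(ltnW lt) // => h.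
set a := (2 ^+ gdist e u v)^-1 in h *; set b := (2 ^+ #|T|)^-1 in h hp *; lra.
Qed.
End Rr.

Section R2.
Variables (R : rcfType) (T : finType) (e : rel T) (u : T).

Definition bb (k : nat) : R := (#|ball e k u|)%:R.
Definition FF (M : nat) : R :=
  2 * (#|T|)%:R * (2 ^+ M)^-1 + \sum_(k < M) 2 * bb k * (2 ^+ k.+1)^-1.

Lemma S_bound : \sum_v pweight R e u v <= FF #|T|.
Proof.
apply: le_trans (ler_sum _ (fun v _ => @pw_bound R T e u v)) _.
rewrite -mulr_sumr big_split /= sumr_const exchange_big /= mulrDr /FF.
apply: lerD.
  have E : #|(xpredT : pred T)| = #|T| by apply: eq_card.
  by rewrite E -[_ *+ #|T|]mulr_natl mulrA.
rewrite mulr_sumr; apply: ler_sum => k _.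
rewrite /ind -big_mkcond /= sumr_const mulrnAr -mulr_natr mulrAC.
by [].
Qed.

Lemma FF_mono K j : FF (K + j) <= FF K.
Proof.
elim: j => [|j IH]; first by rewrite addn0.
apply: le_trans IH; rewrite addnS /FF big_ord_recr /=.
have hb : bb (K + j) <= (#|T|)%:R by rewrite /bb ler_nat max_card.
rewrite !exprS !invfM.
set p := (2 ^+ (K + j))^-1.
have hp : 0 <= p by rewrite invr_ge0 exprn_ge0.
set s := \sum_(i < K + j) _.
set n := (#|T|)%:R in hb *.
set b := bb (K + j) in hb *.
nra.
Qed.

Lemma FF_le K : subcubic e -> FF K <= 2 * (#|T|)%:R * (2 ^+ K)^-1 + (2 ^+ K - 1).
Proof.
move=> sc; rewrite /FF lerD2l.
elim: K => [|K IH]; first by rewrite big_ord0 expr0 subrr.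
rewrite big_ord_recr /=.
have hb : bb K <= 2 ^+ K * 2 ^+ K.
  rewrite /bb -exprMn (_ : 2 * 2 = 4%:R :> R); last by rewrite -natrM.
  by rewrite -natrX ler_nat (@ball_card _ e K u sc).
have h2 : 0 < 2 ^+ K :> R by rewrite exprn_gt0.
have -> : 2 * bb K * (2 ^+ K.+1)^-1 = bb K / 2 ^+ K.
  by rewrite exprS invfM; field; rewrite gt_eqF.
have : bb K / 2 ^+ K <= 2 ^+ K.
  by rewrite ler_pdivrMr // .
rewrite exprS; lra.
Qed.
End R2.

Section R3.
Variable R : rcfType.

Lemma poly_ok (m n : R) : 2 <= m -> m ^+ 2 <= 2 * n -> 2 * n <= 4 * m ^+ 2 ->
  (2 * n + m ^+ 2 + 5 / 2 * m) ^+ 2 <= (18 * n + 49 / 4) * m ^+ 2.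
Proof.
move=> m2 l1 l2.
have hq : (n - m ^+ 2 / 2) * (n - 2 * m ^+ 2) <= 0.
  apply: mulr_ge0_le0; lra.
have e : (2 * n + m ^+ 2 + 5 / 2 * m) ^+ 2 - (18 * n + 49 / 4) * m ^+ 2 =
  4 * ((n - m ^+ 2 / 2) * (n - 2 * m ^+ 2)) + (n * (10 * m - 4 * m ^+ 2) + (- 3 * m ^+ 4 + 5 * m ^+ 3 - 6 * m ^+ 2)).
  by field.
suff : n * (10 * m - 4 * m ^+ 2) + (- 3 * m ^+ 4 + 5 * m ^+ 3 - 6 * m ^+ 2) <= 0 by lra.
case: (lerP m (5/2)) => hm.
  have c : 0 <= 10 * m - 4 * m ^+ 2 by nra.
  have : n * (10 * m - 4 * m ^+ 2) <= 2 * m ^+ 2 * (10 * m - 4 * m ^+ 2).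
    by apply: ler_wpM2r => //; lra.
  have p : 0 <= m ^+ 2 * ((m - 2) * (11 * m - 3)).
    by apply: mulr_ge0; [apply: sqr_ge0 | apply: mulr_ge0; lra].
  have q : 2 * m ^+ 2 * (10 * m - 4 * m ^+ 2) + (- 3 * m ^+ 4 + 5 * m ^+ 3 - 6 * m ^+ 2)
     = - (m ^+ 2 * ((m - 2) * (11 * m - 3))) by ring.
  lra.
have c : 10 * m - 4 * m ^+ 2 <= 0 by nra.
have : n * (10 * m - 4 * m ^+ 2) <= m ^+ 2 / 2 * (10 * m - 4 * m ^+ 2).
  by apply: ler_wnM2r => //; lra.
nra.
Qed.

Lemma final_num (n g H : R) : 1 <= n -> 0 < H -> n <= g * H ->
  (H + 7 / 2) ^+ 2 <= 18 * n + 49 / 4 ->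
  (Num.sqrt (2 * n + 49 / 36) + 7 / 6) / 6 <= g.
Proof.
move=> n1 H0 ng hH.
set s := Num.sqrt _.
have s0 : 0 <= s by apply: sqrtr_ge0.
have s2 : s ^+ 2 = 2 * n + 49 / 36 by rewrite sqr_sqrtr //; lra.
have h3 : H + 7 / 2 <= 3 * s by nra.
have : H * ((s + 7 / 6) / 6) <= n by nra.
nra.
Qed.
End R3.

Lemma H_ok (R : rcfType) (N : nat) : (1 <= N)%N -> exists K, (K <= N)%N /\
  ((2 * N%:R * (2 ^+ K)^-1 + (2 ^+ K - 1) : R) + 7 / 2) ^+ 2 <= 18 * N%:R + 49 / 4.
Proof.
move=> N1; case: (ltngtP N 1) => [|hN|->]; first by case: N N1.
  set K := trunc_log 4 (2 * N).
  have l1 : (4 ^ K <= 2 * N)%N by apply: trunc_logP => //; lia.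
  have l2 : (2 * N < 4 ^ K.+1)%N by apply: trunc_log_ltn.
  have e4 : (4 ^ K = 2 ^ K * 2 ^ K)%N by rewrite -expnMn.
  have kp : (K < 2 ^ K)%N by apply: ltn_expl.
  have K1 : (1 <= K)%N.
    case: K l2 {l1 e4 kp} => [|k] //; rewrite expn1; lia.
  have e4' : (4 ^ K.+1 = 4 * (2 ^ K * 2 ^ K))%N by rewrite expnS e4.
  exists K; split; first by nia.
  set m : R := 2 ^+ K.
  have em : m = (2 ^ K)%:R by rewrite natrX.
  have m2 : 2 <= m by rewrite em ler_nat; lia.
  have a1 : m ^+ 2 <= 2 * N%:R.
    by rewrite em -natrX -natrM ler_nat -mulnn -e4.
  have a2 : 2 * N%:R <= 4 * m ^+ 2.
    rewrite em -natrX -!natrM ler_nat -mulnn; nia.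
  have P := @poly_ok R _ _ m2 a1 a2.
  have mp : 0 < m by lra.
  have eq : (2 * N%:R * m^-1 + (m - 1) + 7 / 2) * m = 2 * N%:R + m ^+ 2 + 5 / 2 * m.
    by field; rewrite gt_eqF.
  rewrite -(@ler_pM2r _ (m ^+ 2)) ?exprn_gt0 // -exprMn eq //.
exists 0%N; split => //.
rewrite expr0 invr1 mulr1 subrr addr0.
have -> : (1%N)%:R = 1 :> R by [].
lra.
Qed.

Theorem corollary2 (R : rcfType) (T : finType) (e : rel T) (g : R) :
  simple_graph e -> subcubic e -> (1 <= #|T|)%N ->
  is_fped_number e g ->
  (Num.sqrt (2 * (#|T|)%:R + 49 / 36) + 7 / 6) / 6 <= g.
Proof.
move=> _ sc N1 [[x [[x0 xc] xs]] _].
case: (@H_ok R _ N1) => K [KN hH].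
set H : R := 2 * (#|T|)%:R * (2 ^+ K)^-1 + (2 ^+ K - 1) in hH.
have Sb : forall u, \sum_v pweight R e u v <= H.
  move=> u; apply: le_trans (@S_bound R T e u) _.
  rewrite -(subnKC KN); apply: le_trans (@FF_mono R T e u K _) _.
  exact: (@FF_le R T e u K sc).
have Hp : 0 < H.
  have a : 0 < 2 * (#|T|)%:R * (2 ^+ K)^-1 :> R.
    by rewrite !mulr_gt0 ?invr_gt0 ?exprn_gt0 // ltr0n.
  have b : 1 <= 2 ^+ K :> R by apply: exprn_ege1; lra.
  rewrite /H; lra.
have nle : (#|T|)%:R <= g * H.
  have s1 : (#|T|)%:R = \sum_(v : T) (1 : R).
    by rewrite sumr_const; congr (_ *+ _); apply/esym/eq_card.
  rewrite s1; apply: le_trans (ler_sum _ (fun v _ => xc v)) _.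
  rewrite exchange_big /= -xs mulr_suml; apply: ler_sum => u _.
  rewrite -mulr_suml mulrC; apply: ler_wpM2l => //.
apply: final_num Hp nle hH.
by rewrite (_ : 1 = 1%:R) // ler_nat.
Qed.
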